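(* Let $X$ be a Peano continuum and $f:X\to X$ a cw-expansive homeomorphism. Then the set $\mathcal S$ of sinks of $f$ is open in $X$, and every point of $\mathcal S\cap\Omega(f)$ is periodic.
   Context: A Peano continuum is a compact, connected, locally connected metric space $(X,d)$ with more than one point. A homeomorphism $f:X\to X$ of a compact metric space is continuum-wise expansive (cw-expansive) if there is $\alpha>0$ such that $\sup_{n\in\mathbb Z}\operatorname{diam} f^n(C)>\alpha$ for every continuum $C\subset X$ containing more than one point. For $\varepsilon>0$ and $x\in X$: $W^s_\varepsilon(x)=\{y\in X:\ d(f^n(x),f^n(y))\le\varepsilon \text{ for all } n\ge 0\}$ and $W^s(x)=\{y\in X:\ d(f^n(x),f^n(y))\to 0 \text{ as } n\to\infty\}$. A point $x$ is a weak sink if $W^s_\varepsilon(x)$ is a neighborhood of $x$ for every $\varepsilon>0$; $x$ is a sink if it is a weak sink and there exists $\varepsilon>0$ with $W^s_\varepsilon(x)\subset W^s(x)$. $\Omega(f)$ is the non-wandering set: $x\in\Omega(f)$ iff for every neighborhood $U$ of $x$ there is $n\ge1$ with $f^n(U)\cap U\neq\emptyset$. *)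

(* Defs.v *)
From HB Require Import structures.
From mathcomp Require Import all_boot all_order all_algebra.
From mathcomp Require Import all_classical all_reals all_analysis.
Set Implicit Arguments. Unset Strict Implicit. Unset Printing Implicit Defensive.
Import Order.TTheory GRing.Theory Num.Theory.
Import numFieldTopology.Exports numFieldNormedType.Exports.
Local Open Scope classical_set_scope.
Local Open Scope ring_scope.

Section Defs.
Context {R : realType} {X : metricType R}.

Definition locally_connected_space : Prop :=
  forall (x : X) (U : set X), nbhs x U ->
    exists V : set X, [/\ open V, connected V, V x & V `<=` U].

Definition peano_continuum : Prop :=
  [/\ compact [set: X], connected [set: X], locally_connected_space
    & exists x y : X, x <> y].

Definition homeomorphism_with (f g : X -> X) : Prop :=
  [/\ cancel f g, cancel g f, continuous f & continuous g].

Definition zpow (f g : X -> X) (n : int) : X -> X :=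
  match n with
  | Posz k => iter k f
  | Negz k => iter k.+1 g
  end.

Definition continuum (C : set X) : Prop := compact C /\ connected C.

Definition nontrivial (C : set X) : Prop := exists x y, [/\ C x, C y & x <> y].

Definition diam (A : set X) : \bar R :=
  ereal_sup [set (mdist x y)%:E | x in A & y in A].

Definition cw_expansive (f g : X -> X) : Prop :=
  exists alpha : R, 0 < alpha /\
    forall C : set X, continuum C -> nontrivial C ->
      (alpha%:E < ereal_sup [set diam (zpow f g n @` C) | n in [set: int]])%E.

Definition local_stable_set (f : X -> X) (eps : R) (x : X) : set X :=
  [set y | forall n : nat, mdist (iter n f x) (iter n f y) <= eps].

Definition stable_set (f : X -> X) (x : X) : set X :=
  [set y | (fun n : nat => mdist (iter n f x) (iter n f y)) @ \oo --> (0 : R)].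

Definition weak_sink (f : X -> X) (x : X) : Prop :=
  forall eps : R, 0 < eps -> nbhs x (local_stable_set f eps x).

Definition sink (f : X -> X) (x : X) : Prop :=
  weak_sink f x /\
  exists eps : R, 0 < eps /\ local_stable_set f eps x `<=` stable_set f x.

Definition nonwandering (f : X -> X) (x : X) : Prop :=
  forall U : set X, nbhs x U ->
    exists n : nat, (1 <= n)%N /\ iter n f @` U `&` U !=set0.

Definition periodic_point (f : X -> X) (x : X) : Prop :=
  exists n : nat, (1 <= n)%N /\ iter n f x = x.

End Defs.

(* Main.v *)
Require Import Defs.
From HB Require Import structures.
From mathcomp Require Import all_boot all_order all_algebra.
From mathcomp Require Import all_classical all_reals all_analysis.
From mathcomp Require Import lra.
Import Order.TTheory GRing.Theory Num.Theory.
Import numFieldTopology.Exports numFieldNormedType.Exports.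
Local Open Scope classical_set_scope.
Local Open Scope ring_scope.

Section Gen.
Context {R : realType} {X : metricType R}.
Local Notation d := (@mdist R X).

Lemma cvg0P (u : nat -> R) : (forall n, 0 <= u n) ->
  (u @ \oo --> (0:R) <-> forall e, 0 < e -> exists K, forall k, (K <= k)%N -> u k < e).
Proof.
move=> u0; rewrite cvgrPdist_lt; split.
- move=> H e e0; have [K _ HK] := H e e0; exists K => k Kk.
  have := HK k Kk; rewrite /= sub0r normrN ger0_norm //.
- move=> H e e0; have [K HK] := H e e0; exists K => // k Kk.
  by rewrite /= sub0r normrN ger0_norm //; apply: HK.
Qed.

Lemma ballP (x : X) (A : set X) : nbhs x A <-> exists2 e, 0 < e & forall y, d x y < e -> A y.
Proof.
rewrite nbhs_ballP; split => -[e e0 H]; exists e => //.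
- by move=> y hy; apply: H; rewrite ballEmdist.
- by move=> y; rewrite ballEmdist; apply: H.
Qed.

Lemma iter_cont (f : X -> X) n : continuous f -> continuous (iter n f).
Proof.
move=> cf; elim: n => [|n IH] x /=; first exact: cvg_id.
exact: (@continuous_comp _ _ _ (iter n f) f x (IH x) (cf _)).
Qed.

Lemma cont_near (h : X -> X) (x : X) e : continuous h -> 0 < e ->
  nbhs x [set z | d (h x) (h z) < e].
Proof.
move=> ch e0; have := ch x; move=> /(_ (ball (h x) e)).
rewrite ballEmdist; apply; apply/ballP; exists e => //.
Qed.

End Gen.

Section Ultra.
Context {T : topologicalType}.

Lemma ultra_lim (G : set_system nat) (GU : UltraFilter G) (cT : compact [set: T])
  (u : nat -> T) : exists q : T, forall N, nbhs q N -> G (u @^-1` N).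
Proof.
have PF : ProperFilter (fmap u G) by apply: fmap_proper_filter.
have [q [_ clq]] := cT (fmap u G) PF (filterT).
exists q => N Nq.
have [//|H] := in_ultra_setVsetC (u @^-1` N) GU.
have [z [/= nz Nz]] := clq (~` N) N H Nq.
by exfalso; apply: nz.
Qed.

Definition Ls (G : set_system nat) (D : nat -> set T) : set T :=
  [set w | forall N, nbhs w N -> G [set m | D m `&` N !=set0]].

Lemma Ls_closed G D : Filter G -> closed (Ls G D).
Proof.
move=> FG w cw N Nw.
have Ni := nbhs_interior Nw.
have [w' [Lw' Nw']] := cw _ Ni.
apply: Lw'.
exact: Nw'.
Qed.


Lemma Ls_connected (G : set_system nat) (GU : UltraFilter G) (cT : compact [set: T])
  (sepT : forall A B : set T, closed A -> closed B -> A `&` B = set0 ->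
     exists U V, [/\ open U, open V, A `<=` U, B `<=` V & U `&` V = set0])
  (D : nat -> set T) : (forall m, connected (D m)) -> connected (Ls G D).
Proof.
move=> Dc; apply/connectedP => E [En LE [sep1 sep2]].
have cLs : closed (Ls G D) by apply: Ls_closed.
have clE : forall b, closed (E b).
  have sub : forall b, closure (E b) `<=` E false `|` E true.
    move=> b w cw; rewrite -LE; apply: cLs.
    apply: (closureS _ cw) => z Ez; rewrite LE; by case: b {cw} Ez => Ez; [right|left].
  case=> w cw; have := sub _ _ cw; case=> // Ew; exfalso.
  - by have : (E false `&` closure (E true)) w by []; rewrite sep2.
  - by have : (closure (E false) `&` E true) w by []; rewrite sep1.
have EE0 : E false `&` E true = set0.
  by apply: separated_disjoint; split.
have [U [V [oU oV EU EV UV]]] := sepT _ _ (clE false) (clE true) EE0.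
have [e0 E0] := En false; have [e1 E1] := En true.
have Le0 : Ls G D e0 by rewrite LE; left.
have Le1 : Ls G D e1 by rewrite LE; right.
have GU0 := Le0 U (open_nbhs_nbhs (conj oU (EU _ E0))).
have GV0 := Le1 V (open_nbhs_nbhs (conj oV (EV _ E1))).
set T0 := [set m | D m `&` U !=set0] `&` [set m | D m `&` V !=set0].
have GT0 : G T0 by apply: filterI.
have key : forall m, T0 m -> exists v, [/\ D m v, ~ U v & ~ V v].
  move=> m [DU DV]; apply: contrapT => /forallNP nv.
  have cov : forall v, D m v -> U v \/ V v.
    move=> v Dv; have := nv v; move=> /not_and3P [] // /contrapT; by [left|right].
  have eq : D m `&` U = D m.
    apply: (Dc m) => //; first by exists U.
    exists (~` V); first exact: open_closedC.
    apply/seteqP; split => v [Dv Hv]; split => //.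
    - by move=> Vv; have : (U `&` V) v by []; rewrite UV.
    - by have [//|] := cov v Dv.
  have [v [Dv Vv]] := DV; have : (D m `&` U) v by rewrite eq.
  by case=> _ Uv; have : (U `&` V) v by []; rewrite UV.
have [u Hu] : exists u : nat -> T, forall m, T0 m -> [/\ D m (u m), ~ U (u m) & ~ V (u m)].
  have H : forall m, exists v, T0 m -> [/\ D m v, ~ U v & ~ V v].
    move=> m; case: (pselect (T0 m)) => Tm; last by exists e0.
    by have [v Hv] := key m Tm; exists v.
  by have [u Hu] := choice H; exists u.
have [q Hq] := ultra_lim G GU cT u.
have Lq : Ls G D q.
  move=> N Nq; apply: filterS (filterI (Hq N Nq) GT0) => m [Nm Tm].
  by have [Dm _ _] := Hu m Tm; exists (u m).
have : (E false `|` E true) q by rewrite -LE.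
have bad : forall W, open W -> W q -> (forall m, T0 m -> ~ W (u m)) -> False.
  move=> W oW Wq nW; have GW := Hq W (open_nbhs_nbhs (conj oW Wq)).
  have [m [Wm Tm]] := filter_ex (filterI GW GT0).
  exact: (nW m Tm Wm).
case=> Eq.
- apply: (bad U oU (EU _ Eq)) => m Tm; by case: (Hu m Tm).
- apply: (bad V oV (EV _ Eq)) => m Tm; by case: (Hu m Tm).
Qed.

End Ultra.

Section Per.
Context {R : realType} {X : metricType R}.
Local Notation d := (@mdist R X).

Lemma tri3 (a b c e : X) : d a e <= d a b + d b c + d c e.
Proof.
apply: le_trans (metric_triangle a c e) _; rewrite lerD2r.
exact: metric_triangle.
Qed.

Lemma sink_nw_periodic (f : X -> X) (cf : continuous f) (x : X) :
  sink f x -> nonwandering f x -> periodic_point f x.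
Proof.
move=> [wx [e0 [e00 incl]]] nx.
have [n0 [n01 st]] : exists n0, (1 <= n0)%N /\ stable_set f x (iter n0 f x).
  have e02 : 0 < e0 / 2 by rewrite divr_gt0.
  have [n [n1 [z [[y Uy yz] Uz]]]] := nx _ (wx _ e02).
  exists n; split => //; apply: incl => k.
  have h1 := Uz k; have h2 := Uy (k + n)%N; rewrite !iterD yz in h2.
  apply: le_trans (metric_triangle _ (iter k f z) _) _.
  rewrite [d (iter k f z) _]metric_sym; lra.
apply: contrapT => np.
have nper : forall j, (1 <= j)%N -> d x (iter j f x) > 0.
  move=> j j1; rewrite mdist_gt0; apply/negP => /eqP ej; apply: np.
  by exists j; split => //; rewrite -ej.
pose r j := d x (iter j f x) / 2.
have rpos : forall j, (1 <= j)%N -> 0 < r j by move=> j j1; rewrite divr_gt0 // nper.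
have Q : forall K, nbhs x [set z | forall j, (1 <= j <= K)%N ->
    d x z < r j /\ d (iter j f x) (iter j f z) < r j].
  elim=> [|K IH].
    by apply: filterS filterT => z _ j /andP[j1 j0]; move: (leq_trans j1 j0).
  have A1 : nbhs x [set z | d x z < r K.+1] by apply/ballP; exists (r K.+1); rewrite ?rpos.
  have A2 := cont_near (iter K.+1 f) x (r K.+1) (iter_cont f K.+1 cf) (rpos K.+1 isT).
  apply: filterS (filterI IH (filterI A1 A2)) => z [H1 [H2 H3]] j /andP[j1 jK].
  case: (ltngtP j K.+1) jK => // [jK _|-> _]; last by split.
  by apply: H1; rewrite j1.
have recur : forall de, 0 < de -> forall K, exists k, (K <= k)%N /\ d x (iter k f x) < de.
  move=> de de0 K.
  have de2 : 0 < de / 2 by rewrite divr_gt0.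
  have B : nbhs x [set z | d x z < de / 2] by apply/ballP; exists (de / 2).
  have [n [n1 [z [[y [[Qy By] Wy] yz] [[Qz Bz] Wz]]]]] :=
    nx _ (filterI (filterI (Q K) B) (wx _ de2)).
  case: (leqP n K) => hn.
    have hnK : (0 < n <= K)%N by rewrite n1 hn.
    have [a1 _] := Qz n hnK; have [_ a2] := Qy n hnK.
    exfalso; have := metric_triangle x z (iter n f x).
    rewrite [d z _]metric_sym -yz; rewrite -yz in a1; move: a1 a2; rewrite /r; lra.
  exists n; split; first exact: ltnW.
  have := metric_triangle x z (iter n f x); have := Wy n.
  rewrite [d z _]metric_sym -yz; rewrite -yz in Bz; move: Bz; rewrite /=; lra.
have d0 : d x (iter n0 f x) = 0.
  apply: contrapT => /eqP nz.
  have Dp : 0 < d x (iter n0 f x) by rewrite lt0r nz mdist_ge0.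
  have de : 0 < d x (iter n0 f x) / 3 by rewrite divr_gt0.
  have [rho rho0 Hrho] := (ballP _ _).1
    (cont_near (iter n0 f) x _ (iter_cont f n0 cf) de).
  have [K HK] := (cvg0P _ (fun k => mdist_ge0 _ _)).1 st _ de.
  have rd : 0 < Num.min rho (d x (iter n0 f x) / 3) by rewrite lt_min rho0 de.
  have [k [Kk hk]] := recur _ rd K.
  move: hk; rewrite lt_min => /andP[hk1 hk2].
  have h3 := Hrho _ hk1.
  have h4 := HK k Kk.
  have e : iter k f (iter n0 f x) = iter n0 f (iter k f x) by rewrite -!iterD addnC.
  have := tri3 x (iter k f x) (iter k f (iter n0 f x)) (iter n0 f x).
  rewrite /= e in h4 *; rewrite [d (iter n0 f (iter k f x)) _]metric_sym.
  move: h3 h4 hk2 => /= h3 h4 hk2; lra.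
apply: np; exists n0; split => //; exact/esym/mdist_positivity.
Qed.

End Per.

Section Main.
Context {R : realType} {X : metricType R}.
Local Notation d := (@mdist R X).

Lemma iter_cancel (f g : X -> X) : cancel f g -> forall n, cancel (iter n f) (iter n g).
Proof.
move=> fg; elim=> [//|n IH] w.
by rewrite iterSr iterS fg IH.
Qed.

Lemma zpow_iter (f g : X -> X) : cancel f g -> forall (n : int) k, (`|n| <= k)%N ->
  exists j, forall v, zpow f g n (iter k f v) = iter j f v.
Proof.
move=> fg [j|j] k /= jk.
  by exists (j + k)%N => v; rewrite iterD.
exists (k - j.+1)%N => v.
have e : iter k f v = iter j.+1 f (iter (k - j.+1) f v) by rewrite -iterD subnKC.
rewrite /= e -iterS; exact: iter_cancel.
Qed.

Lemma zpow_cont (f g : X -> X) : continuous f -> continuous g ->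
  forall n, continuous (zpow f g n).
Proof. by move=> cf cg [j|j] /=; apply: iter_cont. Qed.

Lemma stable_trans (f : X -> X) x y z : stable_set f x y -> stable_set f x z ->
  stable_set f y z.
Proof.
rewrite /stable_set /= => sy sz.
apply/(cvg0P _ (fun k => mdist_ge0 _ _)) => e e0.
have e2 : 0 < e / 2 by rewrite divr_gt0.
have [K1 H1] := (cvg0P _ (fun k => mdist_ge0 _ _)).1 sy _ e2.
have [K2 H2] := (cvg0P _ (fun k => mdist_ge0 _ _)).1 sz _ e2.
exists (maxn K1 K2) => k Kk.
have := metric_triangle (iter k f y) (iter k f x) (iter k f z).
rewrite [d (iter k f y) (iter k f x)]metric_sym.
have := H1 k (leq_trans (leq_maxl _ _) Kk); have := H2 k (leq_trans (leq_maxr _ _) Kk).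
rewrite /=; lra.
Qed.


Lemma near_N (f : X -> X) (cf : continuous f) (y : X) ep : 0 < ep -> forall M,
  nbhs y [set z | forall k, (k < M)%N -> d (iter k f y) (iter k f z) < ep].
Proof.
move=> ep0; elim=> [|M IH]; first by apply: filterS filterT => z _ k.
have A := cont_near (iter M f) y ep (iter_cont f M cf) ep0.
apply: filterS (filterI IH A) => z [H1 H2] k; rewrite ltnS leq_eqVlt.
by case/orP => [/eqP ->//|/H1].
Qed.

Lemma near_sink (f g : X -> X) : @peano_continuum R X -> homeomorphism_with f g ->
  cw_expansive f g -> forall x, sink f x ->
  exists U, nbhs x U /\ forall y, nbhs y U -> sink f y.
Proof.
move=> [cpt _ lc _] [fg gf cf cg] [al [al0 cwH]] x [wx [e0 [e00 incl]]].
pose de := Num.min e0 al / 4.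
have m1 : Num.min e0 al <= e0 by rewrite ge_min lexx.
have m2 : Num.min e0 al <= al by rewrite ge_min lexx orbT.
have m0 : 0 < Num.min e0 al by rewrite lt_min e00 al0.
have de0 : 0 < de by rewrite divr_gt0.
have de1 : 2 * de <= e0 by rewrite /de; lra.
have de2 : 2 * de < al by rewrite /de; lra.
pose U := local_stable_set f de x.
exists U; split; first exact: wx.
move=> y Uy; have yU : U y := nbhs_singleton Uy.
have yx : stable_set f x y by apply: incl => n; have := yU n; lra.
split; last first.
  exists de; split => // z zW; apply: (stable_trans _ _ _ _ yx); apply: incl => n.
  have := metric_triangle (iter n f x) (iter n f y) (iter n f z).
  have := yU n; have := zW n; lra.
move=> ep ep0; apply: contrapT => nW.
have H : forall m, exists t : (set X * X * nat)%type,
  [/\ open t.1.1, connected t.1.1, t.1.1 y, t.1.1 `<=` U & t.1.1 t.1.2] /\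
      ((m <= t.2)%N /\ ep < d (iter t.2 f y) (iter t.2 f t.1.2)).
  move=> m.
  have [V [oV cV Vy VU]] := lc y _ (filterI Uy (near_N f cf y ep ep0 m)).
  have [z [Vz nz]] : exists z, V z /\ ~ local_stable_set f ep y z.
    apply: contrapT => /forallNP hz; apply: nW.
    apply: filterS (open_nbhs_nbhs (conj oV Vy)) => z Vz.
    by have := hz z; move=> /not_andP [] // /contrapT.
  have [k nk] : exists k, ~ (d (iter k f y) (iter k f z) <= ep).
    by apply: contrapT => /forallNP hk; apply: nz => k; apply: contrapT; apply: hk.
  exists (V, z, k); split; [split => //= w /VU [] // | split].
  - rewrite leqNgt; apply/negP => km; apply: nk.
    by have [_ /(_ k km)] := VU z Vz => /ltW.
  - by rewrite ltNge; apply/negP.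
have [F HF] := choice H.
pose V m := (F m).1.1; pose z m := (F m).1.2; pose k m := (F m).2.
pose D m := iter (k m) f @` V m.
have Dc : forall m, connected (D m).
  move=> m; apply: connected_continuous_connected; first by case: (HF m) => -[].
  exact/continuous_subspaceT/iter_cont.
have PE : ProperFilter (\oo : set_system nat) by exact: _.
have [G [GU sG]] := ultraFilterLemma PE.
have HVU : forall m, V m `<=` U by move=> m; case: (HF m) => -[].
have HVy : forall m, V m y by move=> m; case: (HF m) => -[].
have HVz : forall m, V m (z m) by move=> m; case: (HF m) => -[].
have Hk : forall m, (m <= k m)%N by move=> m; case: (HF m) => _ [].
have Hd : forall m, ep < d (iter (k m) f y) (iter (k m) f (z m))
  by move=> m; case: (HF m) => _ [].
pose p m := iter (k m) f y; pose w m := iter (k m) f (z m).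
have [q Hq] := ultra_lim G GU cpt p.
have [q' Hq'] := ultra_lim G GU cpt w.
pose L := Ls G D.
have Lq : L q.
  move=> N Nq; apply: filterS (Hq N Nq) => m Nm; exists (p m); split => //.
  by exists y.
have Lq' : L q'.
  move=> N Nq; apply: filterS (Hq' N Nq) => m Nm; exists (w m); split => //.
  by exists (z m).
have qq : q <> q'.
  move=> eq; subst q'.
  have ep2 : 0 < ep / 2 by rewrite divr_gt0.
  have B : nbhs q [set v | d q v < ep / 2] by apply/ballP; exists (ep / 2).
  have [m [h1 h2]] := filter_ex (filterI (Hq _ B) (Hq' _ B)).
  have := Hd m; have := metric_triangle (p m) q (w m).
  rewrite [d (p m) q]metric_sym; move: h1 h2; rewrite /p /w /=; lra.
have sepX := (@normal_openP R X).1 (compact_normal (@metric_hausdorff R X) cpt).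
have Lconn : connected L := Ls_connected G GU cpt sepX D Dc.
have Lcl : closed L by apply: Ls_closed.
have Lcpt : compact L := subclosed_compact Lcl cpt (@subsetT _ _).
have nt : nontrivial L by exists q, q'.
have keyB : forall n a b, L a -> L b -> d (zpow f g n a) (zpow f g n b) <= 2 * de.
  move=> n a b La Lb; rewrite leNgt; apply/negP => hd.
  pose r := (d (zpow f g n a) (zpow f g n b) - 2 * de) / 2.
  have r0 : 0 < r by rewrite divr_gt0 // subr_gt0.
  have ch := zpow_cont f g cf cg n.
  have Na := cont_near _ a r ch r0; have Nb := cont_near _ b r ch r0.
  have GK : G [set m | (`|n| <= k m)%N].
    apply: sG; apply: (@filterS _ _ _ [set m | (`|n| <= m)%N]).
      by move=> m hm; apply: leq_trans hm (Hk m).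
    by exists `|n|%N.
  have [m [[[u1 [Du1 Nu1]] [u2 [Du2 Nu2]]] km]] :=
    filter_ex (filterI (filterI (La _ Na) (Lb _ Nb)) GK).
  move: Du1 Du2 Nu1 Nu2 => [v1 Vv1 <-] [v2 Vv2 <-].
  have [j Hj] := zpow_iter f g fg n (k m) km.
  rewrite /= !Hj => Nu1 Nu2.
  have t1 := HVU m v1 Vv1 j; have t2 := HVU m v2 Vv2 j.
  have := tri3 (zpow f g n a) (iter j f v1) (iter j f v2) (zpow f g n b).
  have := metric_triangle (iter j f v1) (iter j f x) (iter j f v2).
  rewrite [d (iter j f v1) (iter j f x)]metric_sym [d (iter j f v2) _]metric_sym.
  move: t1 t2 Nu1 Nu2 hd; rewrite /r; lra.
have := cwH L (conj Lcpt Lconn) nt.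
have key2 : (ereal_sup [set diam [set zpow f g n v | v in L] | n in [set: int]]
   <= (2 * de)%:E)%E.
  apply: ge_ereal_sup => _ [n _ <-].
  apply: ge_ereal_sup => _ [_ [a La <-] [_ [b Lb <-] <-]].
  by rewrite lee_fin; apply: keyB.
move=> /lt_le_trans /(_ key2); rewrite lte_fin => h; move: de2 h; lra.
Qed.

End Main.

Theorem mainTheorem6 (R : realType) (X : metricType R) (f g : X -> X) :
  @peano_continuum R X ->
  homeomorphism_with f g ->
  cw_expansive f g ->
  open [set x | sink f x] /\
  (forall x : X, sink f x -> nonwandering f x -> periodic_point f x).
Proof.
move=> hp hh hcw; split.
  rewrite openE => x Sx.
  have [U [Ux HU]] := near_sink f g hp hh hcw x Sx.
  rewrite /interior; apply: filterS (nbhs_interior Ux) => y hy.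
  exact: HU.
by move: hh => [_ _ cf _] x; apply: sink_nw_periodic.
Qed.
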